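(* Let $P,P'\subset\mathbb R^2$ be two open bounded convex polygons and $Q$ the convex hull of $P\cup P'$. If $x_c$ is a vertex of $P$ such that $d(x_c,P')=d_H(P,P')$, then $x_c$ is a vertex of $Q$. If the angle of $P$ at $x_c$ is $\alpha$, then the angle of $Q$ at $x_c$ is at most $(\alpha+\pi)/2<\pi$.
   Context: $d_H(P,P')=\max(\sup_{x\in P}d(x,P'),\sup_{x'\in P'}d(x',P))$ is the Hausdorff distance. *)

(* Defs.v *)
From Stdlib Require Import Reals List.
Open Scope R_scope.

Definition pt := (R * R)%type.

Definition edist (x y : pt) : R :=
  sqrt ((fst x - fst y) ^ 2 + (snd x - snd y) ^ 2).

(* Convex hull: the set of all finite convex combinations of points of S.
   A combination is a list of (weight, point) pairs. *)
Definition conv_hull (S : pt -> Prop) (x : pt) : Prop :=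
  exists l : list (R * pt),
    Forall (fun p => 0 <= fst p /\ S (snd p)) l /\
    fold_right (fun p acc => fst p + acc) 0 l = 1 /\
    x = (fold_right (fun p acc => fst p * fst (snd p) + acc) 0 l,
         fold_right (fun p acc => fst p * snd (snd p) + acc) 0 l).

Definition interior (S : pt -> Prop) (x : pt) : Prop :=
  exists e, 0 < e /\ forall y, edist x y < e -> S y.

Definition closure (S : pt -> Prop) (x : pt) : Prop :=
  forall e, 0 < e -> exists y, S y /\ edist x y < e.

(* An open bounded convex polygon: the (nonempty) interior of the convex hull
   of finitely many points.  Boundedness is automatic. *)
Definition open_convex_polygon (P : pt -> Prop) : Prop :=
  (exists V : list pt,
     forall x, P x <-> interior (conv_hull (fun v => In v V)) x) /\
  (exists x, P x).

(* Vertex of a convex set K: an extreme point of its closure. *)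
Definition is_vertex (K : pt -> Prop) (v : pt) : Prop :=
  closure K v /\
  forall a b t, closure K a -> closure K b -> 0 < t < 1 ->
    v = (fst a + t * (fst b - fst a), snd a + t * (snd b - snd a)) ->
    a = v /\ b = v.

Definition is_inf (E : R -> Prop) (r : R) : Prop :=
  (forall y, E y -> r <= y) /\
  (forall r', (forall y, E y -> r' <= y) -> r' <= r).

Definition dist_to (x : pt) (S : pt -> Prop) (r : R) : Prop :=
  is_inf (fun d => exists y, S y /\ d = edist x y) r.

Definition hausdorff (P P' : pt -> Prop) (h : R) : Prop :=
  exists s1 s2,
    is_lub (fun r => exists x, P x /\ dist_to x P' r) s1 /\
    is_lub (fun r => exists x', P' x' /\ dist_to x' P r) s2 /\
    h = Rmax s1 s2.

Definition vec_angle (u w : pt) : R :=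
  acos ((fst u * fst w + snd u * snd w) /
        (sqrt (fst u ^ 2 + snd u ^ 2) * sqrt (fst w ^ 2 + snd w ^ 2))).

(* The angle of the convex set K at the point v (a vertex):
   the supremum of the angles a - v, b - v for a, b in the closure of K
   distinct from v (the opening angle of the tangent cone at v). *)
Definition angle_at (K : pt -> Prop) (v : pt) (alpha : R) : Prop :=
  is_lub (fun th => exists a b, closure K a /\ closure K b /\ a <> v /\ b <> v /\
            th = vec_angle (fst a - fst v, snd a - snd v)
                           (fst b - fst v, snd b - snd v)) alpha.

(* Main.v *)
Require Import Defs.
From Stdlib Require Import Reals List Lra Lia Psatz Classical ClassicalEpsilon.
Open Scope R_scope.


Lemma sq_le_imp (a b : R) : 0 <= b -> a * a <= b * b -> a <= b.
Proof. intros Hb H. destruct (Rle_or_lt a b); auto. nra. Qed.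

Lemma edist_nonneg x y : 0 <= edist x y.
Proof. unfold edist; apply sqrt_pos. Qed.

Lemma edist_sq x y : edist x y * edist x y = (fst x - fst y) ^ 2 + (snd x - snd y) ^ 2.
Proof. unfold edist; rewrite sqrt_sqrt; [reflexivity|]; apply Rplus_le_le_0_compat; apply pow2_ge_0. Qed.

Lemma edist_sym x y : edist x y = edist y x.
Proof. unfold edist; f_equal; ring. Qed.

Lemma edist_refl x : edist x x = 0.
Proof. unfold edist. replace ((fst x - fst x) ^ 2 + (snd x - snd x) ^ 2) with 0 by ring. apply sqrt_0. Qed.

Lemma edist_lin a b c d k : 0 <= k ->
  fst a - fst b = k * (fst c - fst d) -> snd a - snd b = k * (snd c - snd d) ->
  edist a b = k * edist c d.
Proof.
  intros Hk H1 H2. apply Rle_antisym.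
  - apply sq_le_imp. apply Rmult_le_pos; auto; apply edist_nonneg.
    rewrite edist_sq. replace (k * edist c d * (k * edist c d)) with (k*k*(edist c d * edist c d)) by ring.
    rewrite edist_sq, H1, H2. nra.
  - apply sq_le_imp. apply edist_nonneg.
    rewrite edist_sq. replace (k * edist c d * (k * edist c d)) with (k*k*(edist c d * edist c d)) by ring.
    rewrite edist_sq, H1, H2. nra.
Qed.

Lemma lin_le_edist g1 g2 x y :
  g1 * (fst x - fst y) + g2 * (snd x - snd y) <= sqrt (g1^2 + g2^2) * edist x y.
Proof.
  apply sq_le_imp. apply Rmult_le_pos; [apply sqrt_pos|apply edist_nonneg].
  replace (sqrt (g1 ^ 2 + g2 ^ 2) * edist x y * (sqrt (g1 ^ 2 + g2 ^ 2) * edist x y))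
    with ((sqrt (g1 ^ 2 + g2 ^ 2) * sqrt (g1 ^ 2 + g2 ^ 2)) * (edist x y * edist x y)) by ring.
  rewrite sqrt_sqrt by (apply Rplus_le_le_0_compat; apply pow2_ge_0). rewrite edist_sq.
  pose proof (pow2_ge_0 (g1 * (snd x - snd y) - g2 * (fst x - fst y))).
  assert (E: (g1 ^ 2 + g2 ^ 2) * ((fst x - fst y) ^ 2 + (snd x - snd y) ^ 2) -
    (g1 * (fst x - fst y) + g2 * (snd x - snd y)) * (g1 * (fst x - fst y) + g2 * (snd x - snd y))
    = (g1 * (snd x - snd y) - g2 * (fst x - fst y)) ^ 2) by ring.
  lra.
Qed.

Lemma unit_le_edist u1 u2 x y : u1^2 + u2^2 = 1 ->
  u1 * (fst x - fst y) + u2 * (snd x - snd y) <= edist x y.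
Proof.
  intros H. pose proof (lin_le_edist u1 u2 x y). rewrite H, sqrt_1 in H0. lra.
Qed.

Lemma abs_fst_le x y : Rabs (fst x - fst y) <= edist x y.
Proof.
  apply sq_le_imp. apply edist_nonneg. rewrite edist_sq.
  rewrite <- Rabs_mult, Rabs_pos_eq by (apply Rle_0_sqr).
  pose proof (pow2_ge_0 (fst x - fst y)). pose proof (pow2_ge_0 (snd x - snd y)). simpl; lra.
Qed.

Lemma abs_snd_le x y : Rabs (snd x - snd y) <= edist x y.
Proof.
  apply sq_le_imp. apply edist_nonneg. rewrite edist_sq.
  rewrite <- Rabs_mult, Rabs_pos_eq by (apply Rle_0_sqr).
  pose proof (pow2_ge_0 (fst x - fst y)). pose proof (pow2_ge_0 (snd x - snd y)). simpl; lra.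
Qed.

Definition sumf (g : R * pt -> R) (l : list (R * pt)) : R :=
  fold_right (fun p acc => g p + acc) 0 l.

Lemma sumf_app g l1 l2 : sumf g (l1 ++ l2) = sumf g l1 + sumf g l2.
Proof. induction l1; simpl; unfold sumf in *; simpl; [ring| rewrite IHl1; ring]. Qed.

Lemma sumf_scale g t l :
  sumf g (map (fun p => (t * fst p, snd p)) l) = t * sumf (fun p => g (fst p / t * t, snd p)) l.
Abort.

Definition scl (t : R) (p : R * pt) : R * pt := (t * fst p, snd p).

Lemma sumf_W t l : sumf fst (map (scl t) l) = t * sumf fst l.
Proof. induction l; unfold sumf in *; simpl; [ring | rewrite IHl; ring]. Qed.
Lemma sumf_A t l : sumf (fun p => fst p * fst (snd p)) (map (scl t) l) = t * sumf (fun p => fst p * fst (snd p)) l.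
Proof. induction l; unfold sumf in *; simpl; [ring | rewrite IHl; ring]. Qed.
Lemma sumf_B t l : sumf (fun p => fst p * snd (snd p)) (map (scl t) l) = t * sumf (fun p => fst p * snd (snd p)) l.
Proof. induction l; unfold sumf in *; simpl; [ring | rewrite IHl; ring]. Qed.

Lemma conv_hull_iff S x : conv_hull S x <-> exists l : list (R * pt),
    Forall (fun p => 0 <= fst p /\ S (snd p)) l /\
    sumf fst l = 1 /\
    x = (sumf (fun p => fst p * fst (snd p)) l, sumf (fun p => fst p * snd (snd p)) l).
Proof. reflexivity. Qed.

Lemma conv_single (S : pt -> Prop) x : S x -> conv_hull S x.
Proof.
  intros H. apply conv_hull_iff. exists ((1, x) :: nil). unfold sumf; simpl.
  split; [constructor; [simpl; split; [lra|exact H]|constructor]|]. split; [ring|].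
  destruct x; simpl; f_equal; ring.
Qed.

Lemma conv_comb2 S a b t : conv_hull S a -> conv_hull S b -> 0 <= t <= 1 ->
  conv_hull S (fst a + t * (fst b - fst a), snd a + t * (snd b - snd a)).
Proof.
  rewrite !conv_hull_iff. intros [la [Fa [Wa Ea]]] [lb [Fb [Wb Eb]]] Ht.
  exists (map (scl (1 - t)) la ++ map (scl t) lb). split; [|split].
  - apply Forall_app; split; apply Forall_map;
      [eapply Forall_impl; [|exact Fa] | eapply Forall_impl; [|exact Fb]];
      intros [w p] [Hw Hp]; unfold scl; simpl in *; split; auto; nra.
  - rewrite sumf_app, !sumf_W, Wa, Wb; ring.
  - rewrite !sumf_app, !sumf_A, !sumf_B. subst a b; simpl. f_equal; ring.
Qed.

Definition aff (g1 g2 c : R) (x : pt) := g1 * fst x + g2 * snd x + c.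

Lemma conv_aff S g1 g2 c : (forall x, S x -> 0 <= aff g1 g2 c x) ->
  forall x, conv_hull S x -> 0 <= aff g1 g2 c x.
Proof.
  intros H x Hx. apply conv_hull_iff in Hx. destruct Hx as [l [F [W E]]]. subst x.
  unfold aff; simpl. rewrite <- (Rmult_1_r c), <- W. clear W.
  induction l as [|[w p] l IH]; unfold sumf in *; simpl; [lra|].
  inversion F; subst. simpl in H2. destruct H2 as [Hw Hp]. specialize (IH H3).
  specialize (H p Hp). unfold aff in H. nra.
Qed.

Lemma clos_aff S g1 g2 c : (forall x, S x -> 0 <= aff g1 g2 c x) ->
  forall x, closure S x -> 0 <= aff g1 g2 c x.
Proof.
  intros H x Hx. destruct (Rle_or_lt 0 (aff g1 g2 c x)) as [|Hneg]; auto.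
  set (G := sqrt (g1^2 + g2^2)). assert (HG : 0 <= G) by apply sqrt_pos.
  destruct (Hx (- aff g1 g2 c x / (G + 1))) as [y [Sy Dy]].
  { apply Rdiv_lt_0_compat; lra. }
  specialize (H y Sy). pose proof (lin_le_edist g1 g2 y x). fold G in H0.
  rewrite edist_sym in Dy. unfold aff in *.
  assert (G * edist y x < (G+1) * (- (g1 * fst x + g2 * snd x + c) / (G + 1))).
  { apply Rle_lt_trans with ((G+1) * edist y x). pose proof (edist_nonneg y x); nra.
    apply Rmult_lt_compat_l; lra. }
  replace ((G+1) * (- (g1 * fst x + g2 * snd x + c) / (G + 1))) with (- (g1 * fst x + g2 * snd x + c)) in H1 by (field; lra).
  assert (E: g1 * (fst y - fst x) + g2 * (snd y - snd x) = (g1 * fst y + g2 * snd y + c) - (g1 * fst x + g2 * snd x + c)) by ring.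
  lra.
Qed.

Lemma interior_sub S x : Defs.interior S x -> S x.
Proof. intros [e [He H]]. apply H. rewrite edist_refl; auto. Qed.

Lemma closure_sub (S : pt -> Prop) x : S x -> closure S x.
Proof. intros H e He. exists x. rewrite edist_refl; auto. Qed.

Lemma closure_mono (S T : pt -> Prop) : (forall x, S x -> T x) -> forall x, closure S x -> closure T x.
Proof. intros H x Hx e He. destruct (Hx e He) as [y [Sy D]]. eauto. Qed.


Section Poly.
Variable V : list pt.
Variable P : pt -> Prop.
Hypothesis HP : forall x, P x <-> Defs.interior (conv_hull (fun v => In v V)) x.

Lemma P_conv x : P x -> conv_hull (fun v => In v V) x.
Proof. intros H; apply HP in H; apply interior_sub in H; auto. Qed.

Lemma conv_sub_clP x0 : P x0 -> forall w, conv_hull (fun v => In v V) w -> closure P w.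
Proof.
  intros H0 w Hw eps Heps. apply HP in H0. destruct H0 as [e [He Hb]].
  set (D := edist w x0). assert (HD : 0 <= D) by apply edist_nonneg.
  set (t := Rmin (1/2) (eps / (D+1))).
  assert (Ht0 : 0 < t). { unfold t; apply Rmin_pos; [lra|apply Rdiv_lt_0_compat; lra]. }
  assert (Ht1 : t <= 1/2) by apply Rmin_l.
  assert (Ht2 : t <= eps / (D+1)) by apply Rmin_r.
  exists (fst w + t * (fst x0 - fst w), snd w + t * (snd x0 - snd w)). split.
  - apply HP. exists (t * e). split; [nra|]. intros [q1 q2] Hq.
    set (q' := (fst w + (q1 - fst w) / t, snd w + (q2 - snd w) / t)).
    assert (Hq' : conv_hull (fun v => In v V) q').
    { apply Hb. rewrite (edist_lin x0 q' (fst w + t * (fst x0 - fst w), snd w + t * (snd x0 - snd w)) (q1,q2) (/t)).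
      - apply Rmult_lt_reg_l with t; auto. rewrite <- Rmult_assoc, Rinv_r, Rmult_1_l by lra. lra.
      - left; apply Rinv_0_lt_compat; auto.
      - unfold q'; simpl; field; lra.
      - unfold q'; simpl; field; lra. }
    pose proof (conv_comb2 _ _ _ t Hw Hq' ltac:(lra)).
    replace (q1, q2) with (fst w + t * (fst q' - fst w), snd w + t * (snd q' - snd w)); auto.
    unfold q'; simpl; f_equal; field; lra.
  - rewrite (edist_lin w _ w x0 t); [| lra | simpl; ring | simpl; ring].
    fold D.
    apply Rle_lt_trans with (eps / (D+1) * D). apply Rmult_le_compat_r; auto.
    apply Rmult_lt_reg_l with (D+1); [lra|]. field_simplify; [|lra]. nra.
Qed.

Lemma P_convex x y t : P x -> P y -> 0 <= t <= 1 ->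
  P (fst x + t * (fst y - fst x), snd x + t * (snd y - snd x)).
Proof.
  intros Hx Hy Ht. apply HP in Hx, Hy. destruct Hx as [e1 [He1 H1]]. destruct Hy as [e2 [He2 H2]].
  apply HP. exists (Rmin e1 e2). split; [apply Rmin_pos; auto|]. intros [q1 q2] Hq.
  set (d1 := q1 - (fst x + t * (fst y - fst x))). set (d2 := q2 - (snd x + t * (snd y - snd x))).
  assert (Ea : conv_hull (fun v => In v V) (fst x + d1, snd x + d2)).
  { apply H1. rewrite (edist_lin _ _ (fst x + t * (fst y - fst x), snd x + t * (snd y - snd x)) (q1,q2) 1);
    [| lra | unfold d1; simpl; ring | unfold d2; simpl; ring].
    pose proof (Rmin_l e1 e2). lra. }
  assert (Eb : conv_hull (fun v => In v V) (fst y + d1, snd y + d2)).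
  { apply H2. rewrite (edist_lin _ _ (fst x + t * (fst y - fst x), snd x + t * (snd y - snd x)) (q1,q2) 1);
    [| lra | unfold d1; simpl; ring | unfold d2; simpl; ring].
    pose proof (Rmin_r e1 e2). lra. }
  pose proof (conv_comb2 _ _ _ t Ea Eb Ht). simpl in H.
  replace (q1, q2) with (fst x + d1 + t * (fst y + d1 - (fst x + d1)), snd x + d2 + t * (snd y + d2 - (snd x + d2))); auto.
  unfold d1, d2; f_equal; ring.
Qed.

Lemma conv_eq0 g1 g2 c : (forall w, In w V -> aff g1 g2 c w = 0) ->
  forall x, conv_hull (fun v => In v V) x -> aff g1 g2 c x = 0.
Proof.
  intros H x Hx. apply Rle_antisym.
  - assert (0 <= aff (-g1) (-g2) (-c) x).
    { apply (conv_aff (fun v => In v V)); auto. intros w Hw; pose proof (H w Hw); unfold aff in *; lra. }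
    unfold aff in *; lra.
  - apply (conv_aff (fun v => In v V)); auto. intros w Hw; rewrite (H w Hw); lra.
Qed.

Lemma Hline x0 : P x0 -> forall g1 g2 c, g1 <> 0 \/ g2 <> 0 ->
  ~ (forall w, In w V -> aff g1 g2 c w = 0).
Proof.
  intros H0 g1 g2 c Hg Hall. apply HP in H0. destruct H0 as [e [He Hb]].
  set (G := sqrt (g1^2 + g2^2)).
  assert (HG2 : G * G = g1^2 + g2^2).
  { unfold G; rewrite sqrt_sqrt; auto. apply Rplus_le_le_0_compat; apply pow2_ge_0. }
  assert (HGp : 0 < g1^2 + g2^2).
  { destruct Hg as [Hg|Hg]; [assert (0 < g1 * g1) by (apply Rsqr_pos_lt; auto)|assert (0 < g2 * g2) by (apply Rsqr_pos_lt; auto)];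
    pose proof (pow2_ge_0 g1); pose proof (pow2_ge_0 g2); simpl in *; lra. }
  assert (HG : 0 < G) by (unfold G; apply sqrt_lt_R0; auto).
  set (t := e / (2 * G)).
  assert (Ht : 0 < t) by (unfold t; apply Rdiv_lt_0_compat; lra).
  assert (C1 : conv_hull (fun v => In v V) x0) by (apply Hb; rewrite edist_refl; auto).
  assert (C2 : conv_hull (fun v => In v V) (fst x0 + t * g1, snd x0 + t * g2)).
  { apply Hb. rewrite (edist_lin _ _ (0,0) (g1,g2) t); [| lra | simpl; ring | simpl; ring].
    unfold edist; cbn [fst snd]. replace ((0 - g1) ^ 2 + (0 - g2) ^ 2) with (g1^2+g2^2) by ring. fold G.
    unfold t. replace (e / (2 * G) * G) with (e/2) by (field; lra). lra. }
  pose proof (conv_eq0 g1 g2 c Hall _ C1). pose proof (conv_eq0 g1 g2 c Hall _ C2).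
  unfold aff in *; simpl in *.
  assert (t * (g1^2 + g2^2) = 0) by nra. nra.
Qed.

End Poly.


Definition ang (x y : R) : R :=
  if Rle_dec 0 y then acos (x / sqrt (x^2 + y^2)) else - acos (x / sqrt (x^2 + y^2)).

Lemma sum_sq_nonneg x y : 0 <= x^2 + y^2.
Proof. apply Rplus_le_le_0_compat; apply pow2_ge_0. Qed.

Lemma polar x y : 0 < x^2 + y^2 ->
  x = sqrt (x^2+y^2) * cos (ang x y) /\ y = sqrt (x^2+y^2) * sin (ang x y) /\
  - PI <= ang x y <= PI.
Proof.
  intros H. set (r := sqrt (x^2+y^2)).
  assert (Hr : 0 < r) by (apply sqrt_lt_R0; auto).
  assert (Hr2 : r * r = x^2+y^2) by (apply sqrt_sqrt; lra).
  assert (Hb : -1 <= x / r <= 1).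
  { assert ((x/r) * (x/r) <= 1).
    { replace ((x/r)*(x/r)) with (x*x/(r*r)) by (field; lra). rewrite Hr2.
      apply Rmult_le_reg_r with (x^2+y^2); auto. field_simplify; [|lra].
      pose proof (pow2_ge_0 y). simpl; lra. }
    split; nra. }
  assert (Hs : sqrt (1 - (x / r)²) = Rabs y / r).
  { replace (1 - (x/r)²) with ((Rabs y / r)²).
    - apply sqrt_Rsqr. apply Rmult_le_pos; [apply Rabs_pos|left; apply Rinv_0_lt_compat; lra].
    - unfold Rsqr. replace (Rabs y / r * (Rabs y / r)) with (Rabs y * Rabs y / (r*r)) by (field; lra).
      replace (x / r * (x / r)) with ((x*x)/(r*r)) by (field; lra).
      rewrite <- Rabs_mult, Rabs_pos_eq by nra. rewrite Hr2. field. lra. }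
  pose proof (acos_bound (x/r)).
  unfold ang; fold r. destruct (Rle_dec 0 y) as [Hy|Hy].
  - rewrite cos_acos, sin_acos, Hs by auto. rewrite Rabs_pos_eq by auto.
    repeat split; try (field; lra); lra.
  - rewrite cos_neg, sin_neg, cos_acos, sin_acos, Hs by auto. rewrite Rabs_left by lra.
    repeat split; try (field; lra); lra.
Qed.

Lemma cos_ge0_inv x : - (3 * (PI / 2)) < x -> x < 3 * (PI / 2) -> 0 <= cos x ->
  - (PI / 2) <= x <= PI / 2.
Proof.
  intros H1 H2 H. split.
  - destruct (Rle_or_lt (- (PI/2)) x); auto.
    rewrite <- cos_neg in H. pose proof (cos_lt_0 (-x)). lra.
  - destruct (Rle_or_lt x (PI/2)); auto. pose proof (cos_lt_0 x). lra.
Qed.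

Lemma sin_ge0_inv x : - PI < x -> x <= PI -> 0 <= sin x -> 0 <= x.
Proof.
  intros H1 H2 H. destruct (Rle_or_lt 0 x); auto.
  pose proof (sin_gt_0 (-x)). rewrite sin_neg in H3. lra.
Qed.

Definition Xc (u w : pt) := fst u * fst w + snd u * snd w.
Definition Yc (u w : pt) := - snd u * fst w + fst u * snd w.
Definition phi (u w : pt) := ang (Xc u w) (Yc u w).

Lemma XY_norm u w : (fst u)^2 + (snd u)^2 = 1 ->
  (Xc u w)^2 + (Yc u w)^2 = (fst w)^2 + (snd w)^2.
Proof.
  intros H. unfold Xc, Yc.
  replace ((fst u * fst w + snd u * snd w) ^ 2 + (- snd u * fst w + fst u * snd w) ^ 2)
    with (((fst u)^2 + (snd u)^2) * ((fst w)^2 + (snd w)^2)) by ring. rewrite H; ring.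
Qed.

Lemma XY_dot u w w' : (fst u)^2 + (snd u)^2 = 1 ->
  Xc u w * Xc u w' + Yc u w * Yc u w' = fst w * fst w' + snd w * snd w'.
Proof.
  intros H. unfold Xc, Yc.
  replace ((fst u * fst w + snd u * snd w) * (fst u * fst w' + snd u * snd w') +
    (- snd u * fst w + fst u * snd w) * (- snd u * fst w' + fst u * snd w'))
    with (((fst u)^2 + (snd u)^2) * (fst w * fst w' + snd w * snd w')) by ring. rewrite H; ring.
Qed.

Lemma polar_u u w : (fst u)^2 + (snd u)^2 = 1 -> 0 < (fst w)^2 + (snd w)^2 ->
  Xc u w = sqrt ((fst w)^2 + (snd w)^2) * cos (phi u w) /\
  Yc u w = sqrt ((fst w)^2 + (snd w)^2) * sin (phi u w) /\
  - PI <= phi u w <= PI.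
Proof.
  intros Hu Hw. rewrite <- (XY_norm u w Hu) in *. unfold phi. apply polar; auto.
Qed.

Lemma vec_angle_polar u w w' : (fst u)^2 + (snd u)^2 = 1 ->
  0 < (fst w)^2 + (snd w)^2 -> 0 < (fst w')^2 + (snd w')^2 ->
  Rabs (phi u w - phi u w') <= PI ->
  vec_angle w w' = Rabs (phi u w - phi u w').
Proof.
  intros Hu Hw Hw' Hd. unfold vec_angle.
  destruct (polar_u u w Hu Hw) as [X1 [Y1 _]].
  destruct (polar_u u w' Hu Hw') as [X2 [Y2 _]].
  rewrite <- (XY_dot u w w' Hu), X1, Y1, X2, Y2.
  set (r := sqrt (fst w ^ 2 + snd w ^ 2)). set (r' := sqrt (fst w' ^ 2 + snd w' ^ 2)).
  assert (0 < r) by (apply sqrt_lt_R0; auto). assert (0 < r') by (apply sqrt_lt_R0; auto).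
  replace ((r * cos (phi u w) * (r' * cos (phi u w')) + r * sin (phi u w) * (r' * sin (phi u w'))) / (r * r'))
    with (cos (phi u w - phi u w')) by (rewrite cos_minus; field; lra).
  destruct (Rle_or_lt 0 (phi u w - phi u w')).
  - rewrite Rabs_pos_eq in * by auto. apply acos_cos; lra.
  - rewrite Rabs_left in * by auto. rewrite <- cos_neg. apply acos_cos; lra.
Qed.

Lemma vec_angle_opp w k : 0 < (fst w)^2 + (snd w)^2 -> 0 < k ->
  vec_angle w (- k * fst w, - k * snd w) = PI.
Proof.
  intros Hw Hk. unfold vec_angle; cbn [fst snd].
  replace ((- k * fst w) ^ 2 + (- k * snd w) ^ 2) with ((k*k) * (fst w ^ 2 + snd w ^ 2)) by ring.
  rewrite sqrt_mult by (nra || apply sum_sq_nonneg). rewrite sqrt_square by lra.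
  set (r := sqrt (fst w ^ 2 + snd w ^ 2)).
  assert (0 < r) by (apply sqrt_lt_R0; auto).
  assert (Hr2 : r * r = fst w ^ 2 + snd w ^ 2) by (apply sqrt_sqrt; lra).
  replace ((fst w * (- k * fst w) + snd w * (- k * snd w)) / (r * (k * r))) with (Ropp 1).
  - rewrite acos_opp, acos_1; ring.
  - replace (fst w * (- k * fst w) + snd w * (- k * snd w)) with (- k * (r * r)) by (rewrite Hr2; ring).
    field; lra.
Qed.


Definition lin (g1 g2 : R) (w : pt) := g1 * fst w + g2 * snd w.
Definition dv (v x : pt) : pt := (fst x - fst v, snd x - snd v).

Lemma clos_lin S v g1 g2 c0 : (forall x, S x -> c0 <= lin g1 g2 (dv v x)) ->
  forall x, closure S x -> c0 <= lin g1 g2 (dv v x).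
Proof.
  intros H x Hx.
  assert (0 <= aff g1 g2 (-(g1 * fst v + g2 * snd v) - c0) x).
  { apply (clos_aff S); auto. intros y Hy. specialize (H y Hy). unfold lin, dv, aff in *; simpl in *; lra. }
  unfold lin, dv, aff in *; simpl in *; lra.
Qed.

Lemma conv_lin S v g1 g2 c0 : (forall x, S x -> c0 <= lin g1 g2 (dv v x)) ->
  forall x, conv_hull S x -> c0 <= lin g1 g2 (dv v x).
Proof.
  intros H x Hx.
  assert (0 <= aff g1 g2 (-(g1 * fst v + g2 * snd v) - c0) x).
  { apply (conv_aff S); auto. intros y Hy. specialize (H y Hy). unfold lin, dv, aff in *; simpl in *; lra. }
  unfold lin, dv, aff in *; simpl in *; lra.
Qed.

Lemma list_min (L : list pt) (Q : pt -> Prop) (f : pt -> R) :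
  (exists w, In w L /\ Q w) -> exists w, In w L /\ Q w /\ forall w', In w' L -> Q w' -> f w <= f w'.
Proof.
  induction L as [|a L IH]; intros [w [Hw Qw]]; [destruct Hw|].
  destruct (classic (exists w, In w L /\ Q w)) as [Hex|Hnex].
  - destruct (IH Hex) as [m [Hm [Qm Hmin]]].
    destruct (classic (Q a)) as [Qa|Qa].
    + destruct (Rle_or_lt (f a) (f m)).
      * exists a. split; [left; auto|]. split; auto. intros w' [<-|Hw'] Qw'; [lra|]. specialize (Hmin w' Hw' Qw'); lra.
      * exists m. split; [right; auto|]. split; auto. intros w' [<-|Hw'] Qw'; [lra|]. auto.
    + exists m. split; [right; auto|]. split; auto. intros w' [<-|Hw'] Qw'; [contradiction|]. auto.
  - destruct Hw as [->|Hw]; [|exfalso; apply Hnex; eauto].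
    exists w. split; [left; auto|]. split; auto. intros w' [<-|Hw'] Qw'; [lra|]. exfalso; apply Hnex; eauto.
Qed.

Lemma nz_of_neq v w : w <> v -> 0 < (fst (dv v w))^2 + (snd (dv v w))^2.
Proof.
  intros H. unfold dv; simpl.
  destruct (Req_dec (fst w) (fst v)) as [E1|E1]; destruct (Req_dec (snd w) (snd v)) as [E2|E2].
  - exfalso; apply H. destruct w, v; simpl in *; subst; auto.
  - assert (snd w - snd v <> 0) by lra. pose proof (pow2_ge_0 (fst w - fst v)).
    assert (0 < (snd w - snd v) * (snd w - snd v)) by (apply Rsqr_pos_lt; auto). simpl in *; lra.
  - assert (fst w - fst v <> 0) by lra. pose proof (pow2_ge_0 (snd w - snd v)).
    assert (0 < (fst w - fst v) * (fst w - fst v)) by (apply Rsqr_pos_lt; auto). simpl in *; lra.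
  - assert (fst w - fst v <> 0) by lra. pose proof (pow2_ge_0 (snd w - snd v)).
    assert (0 < (fst w - fst v) * (fst w - fst v)) by (apply Rsqr_pos_lt; auto). simpl in *; lra.
Qed.

Lemma eps_ge a b : (forall eps, 0 < eps -> b - eps <= a) -> b <= a.
Proof.
  intros H. destruct (Rle_or_lt b a); auto. specialize (H ((b - a)/2)). lra.
Qed.

Lemma recon u w : (fst u)^2 + (snd u)^2 = 1 ->
  fst w = fst u * Xc u w - snd u * Yc u w /\ snd w = snd u * Xc u w + fst u * Yc u w.
Proof.
  intros Hu. unfold Xc, Yc. split.
  - replace (fst u * (fst u * fst w + snd u * snd w) - snd u * (- snd u * fst w + fst u * snd w))
      with (((fst u)^2 + (snd u)^2) * fst w) by ring. rewrite Hu; ring.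
  - replace (snd u * (fst u * fst w + snd u * snd w) + fst u * (- snd u * fst w + fst u * snd w))
      with (((fst u)^2 + (snd u)^2) * snd w) by ring. rewrite Hu; ring.
Qed.

Lemma sc1 x : sin x ^ 2 + cos x ^ 2 = 1.
Proof. rewrite <- (sin2_cos2 x). unfold Rsqr; ring. Qed.

Lemma E2 (P : pt -> Prop) v (Hext : is_vertex P v) p q lam mu : closure P p -> closure P q -> p <> v -> 0 < lam -> 0 <= mu ->
  lam * (fst p - fst v) + mu * (fst q - fst v) = 0 ->
  lam * (snd p - snd v) + mu * (snd q - snd v) = 0 -> False.
Proof.
  intros Hp Hq Hpv Hl Hm E1 E2.
  destruct (Rle_lt_or_eq_dec 0 mu Hm) as [Hm'|Hm'].
  - destruct Hext as [_ Hx]. 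
    destruct (Hx p q (mu / (lam + mu)) Hp Hq).
    + split; [apply Rdiv_lt_0_compat; lra|]. apply (Rmult_lt_reg_r (lam + mu)); [lra|].
      unfold Rdiv; rewrite Rmult_assoc, Rinv_l by lra. lra.
    + destruct v as [v1 v2]; simpl in *. f_equal.
      * replace (fst p + mu / (lam + mu) * (fst q - fst p)) with ((lam * fst p + mu * fst q) / (lam + mu)) by (field; lra).
        apply (Rmult_eq_reg_r (lam + mu)); [|lra]. unfold Rdiv; rewrite Rmult_assoc, Rinv_l by lra. lra.
      * replace (snd p + mu / (lam + mu) * (snd q - snd p)) with ((lam * snd p + mu * snd q) / (lam + mu)) by (field; lra).
        apply (Rmult_eq_reg_r (lam + mu)); [|lra]. unfold Rdiv; rewrite Rmult_assoc, Rinv_l by lra. lra.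
    + contradiction.
  - subst mu. apply Hpv. destruct p, v; simpl in *.
    assert (r - r1 = 0) by (apply (Rmult_eq_reg_l lam); lra).
    assert (r0 - r2 = 0) by (apply (Rmult_eq_reg_l lam); lra).
    f_equal; lra.
Qed.


Section Core.
Variables (P P' : pt -> Prop) (v : pt) (h alpha : R) (V : list pt) (u : pt).
Hypothesis Hu : (fst u)^2 + (snd u)^2 = 1.
Hypothesis HPc : forall x, P x -> conv_hull (fun w => In w V) x.
Hypothesis HVc : forall w, conv_hull (fun w => In w V) w -> closure P w.
Hypothesis Hline : forall g1 g2 c, g1 <> 0 \/ g2 <> 0 -> ~ (forall w, In w V -> aff g1 g2 c w = 0).
Hypothesis Hext : is_vertex P v.
Hypothesis Hiii : forall x, P x -> 0 <= Xc u (dv v x).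
Hypothesis Hii : forall z, P' z -> h <= Xc u (dv v z).
Hypothesis HF2 : forall z, P' z -> forall eps, 0 < eps -> exists x, P x /\ edist z x < h + eps.
Hypothesis Halpha : angle_at P v alpha.

Lemma Xc_lin w : Xc u w = lin (fst u) (snd u) w.
Proof. reflexivity. Qed.

Definition fph (w : pt) := phi u (dv v w).

Lemma Xc_clP x : closure P x -> 0 <= Xc u (dv v x).
Proof. rewrite Xc_lin. apply clos_lin. intros y Hy. rewrite <- Xc_lin. auto. Qed.

Lemma V_clP w : In w V -> closure P w.
Proof. intros H. apply HVc. apply conv_single; auto. Qed.

Lemma ph_range x : closure P x -> x <> v -> - (PI/2) <= fph x <= PI/2.
Proof.
  intros Hx Hxv. pose proof (Xc_clP x Hx).
  destruct (polar_u u (dv v x) Hu (nz_of_neq v x Hxv)) as [HX [_ Hr]].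
  pose proof PI_RGT_0.
  unfold fph. apply cos_ge0_inv; try lra.
  set (r := sqrt (fst (dv v x) ^ 2 + snd (dv v x) ^ 2)) in *.
  assert (0 < r) by (apply sqrt_lt_R0; apply nz_of_neq; auto).
  rewrite HX in H. destruct (Rle_or_lt 0 (cos (phi u (dv v x)))); auto. nra.
Qed.

Lemma exists_nv : exists w, In w V /\ w <> v.
Proof.
  apply NNPP. intros Hn. apply (Hline 1 0 (- fst v)); [left; lra|].
  intros w Hw. unfold aff. destruct (classic (w = v)) as [->|Hne]; [ring|].
  exfalso; apply Hn; eauto.
Qed.

Lemma core_main : alpha < PI /\
  forall a b, closure (conv_hull (fun x => P x \/ P' x)) a ->
              closure (conv_hull (fun x => P x \/ P' x)) b -> a <> v -> b <> v ->
              vec_angle (dv v a) (dv v b) <= (alpha + PI) / 2.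
Proof.
  pose proof PI_RGT_0 as HPI.
  destruct (list_min V (fun w => w <> v) fph exists_nv) as [wj [Hj [Hjv Hmin]]].
  destruct (list_min V (fun w => w <> v) (fun w => - fph w) exists_nv) as [wk [Hk [Hkv Hmax']]].
  set (a1 := fph wj). set (a2 := fph wk).
  assert (Hmax : forall w, In w V -> w <> v -> fph w <= a2).
  { intros w Hw Hwv. specialize (Hmax' w Hw Hwv). unfold a2; lra. }
  assert (Ra1 := ph_range wj (V_clP wj Hj) Hjv). fold a1 in Ra1.
  assert (Ra2 := ph_range wk (V_clP wk Hk) Hkv). fold a2 in Ra2.
  assert (Ha12 : a1 <= a2) by (apply Hmin in Hk; auto; fold a2 in Hk; unfold a1; lra).
  set (M1c1 := cos a1 * - snd u - sin a1 * fst u). set (M1c2 := cos a1 * fst u - sin a1 * snd u).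
  set (M2c1 := sin a2 * fst u - cos a2 * - snd u). set (M2c2 := sin a2 * snd u - cos a2 * fst u).
  assert (PolM1 : forall x, x <> v ->
     lin M1c1 M1c2 (dv v x) = sqrt (fst (dv v x) ^ 2 + snd (dv v x) ^ 2) * sin (fph x - a1)).
  { intros x Hx. destruct (polar_u u (dv v x) Hu (nz_of_neq v x Hx)) as [HX [HY _]].
    rewrite sin_minus. unfold fph.
    replace (lin M1c1 M1c2 (dv v x)) with (cos a1 * Yc u (dv v x) - sin a1 * Xc u (dv v x))
      by (unfold lin, M1c1, M1c2, Xc, Yc; ring).
    rewrite HX, HY. ring. }
  assert (PolM2 : forall x, x <> v ->
     lin M2c1 M2c2 (dv v x) = sqrt (fst (dv v x) ^ 2 + snd (dv v x) ^ 2) * sin (a2 - fph x)).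
  { intros x Hx. destruct (polar_u u (dv v x) Hu (nz_of_neq v x Hx)) as [HX [HY _]].
    rewrite sin_minus. unfold fph.
    replace (lin M2c1 M2c2 (dv v x)) with (sin a2 * Xc u (dv v x) - cos a2 * Yc u (dv v x))
      by (unfold lin, M2c1, M2c2, Xc, Yc; ring).
    rewrite HX, HY. ring. }
  assert (Hr : forall x, x <> v -> 0 < sqrt (fst (dv v x) ^ 2 + snd (dv v x) ^ 2)).
  { intros x Hx; apply sqrt_lt_R0; apply nz_of_neq; auto. }
  assert (M1V : forall w, In w V -> 0 <= lin M1c1 M1c2 (dv v w)).
  { intros w Hw. destruct (classic (w = v)) as [->|Hwv].
    - unfold lin, dv; simpl; lra.
    - rewrite PolM1 by auto. apply Rmult_le_pos; [left; auto|].
      specialize (Hmin w Hw Hwv). pose proof (ph_range w (V_clP w Hw) Hwv).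
      apply sin_ge_0; fold a1 in Hmin; lra. }
  assert (M2V : forall w, In w V -> 0 <= lin M2c1 M2c2 (dv v w)).
  { intros w Hw. destruct (classic (w = v)) as [->|Hwv].
    - unfold lin, dv; simpl; lra.
    - rewrite PolM2 by auto. apply Rmult_le_pos; [left; auto|].
      specialize (Hmax w Hw Hwv). pose proof (ph_range w (V_clP w Hw) Hwv).
      apply sin_ge_0; lra. }
  assert (M1P : forall x, closure P x -> 0 <= lin M1c1 M1c2 (dv v x)).
  { apply clos_lin. intros x Hx. apply (conv_lin (fun w => In w V)); auto. }
  assert (M2P : forall x, closure P x -> 0 <= lin M2c1 M2c2 (dv v x)).
  { apply clos_lin. intros x Hx. apply (conv_lin (fun w => In w V)); auto. }
  assert (Hlt : a1 < a2).
  { destruct (Rle_lt_or_eq_dec _ _ Ha12) as [|Heq]; auto. exfalso.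
    apply (Hline M1c1 M1c2 (- (M1c1 * fst v + M1c2 * snd v))).
    - destruct (Req_dec M1c1 0); [right|left; auto]. intros HM2.
      assert (M1c1^2 + M1c2^2 = 1).
      { unfold M1c1, M1c2. replace ((cos a1 * - snd u - sin a1 * fst u) ^ 2 + (cos a1 * fst u - sin a1 * snd u) ^ 2)
          with ((sin a1 ^2 + cos a1 ^2) * ((fst u)^2 + (snd u)^2)) by ring.
        rewrite Hu, sc1; ring. }
      rewrite H, HM2 in H0. lra.
    - intros w Hw. destruct (classic (w = v)) as [->|Hwv]. { unfold aff; ring. }
      specialize (Hmin w Hw Hwv). specialize (Hmax w Hw Hwv). fold a1 in Hmin.
      assert (fph w = a1) by lra. pose proof (PolM1 w Hwv). rewrite H, Rminus_diag, sin_0, Rmult_0_r in H0.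
      unfold lin, dv, aff in *; simpl in *; lra. }
  assert (Hpi : a2 - a1 < PI).
  { destruct (Rlt_or_le (a2 - a1) PI) as [|Hge]; auto. exfalso.
    assert (E1 : a1 = - (PI/2)) by lra. assert (E2' : a2 = PI/2) by lra.
    destruct (polar_u u (dv v wj) Hu (nz_of_neq v wj Hjv)) as [Xj [Yj _]].
    destruct (polar_u u (dv v wk) Hu (nz_of_neq v wk Hkv)) as [Xk [Yk _]].
    fold (fph wj) a1 in Xj, Yj. fold (fph wk) a2 in Xk, Yk.
    rewrite E1, cos_neg, cos_PI2 in Xj. rewrite E1, sin_neg, sin_PI2 in Yj.
    rewrite E2', cos_PI2 in Xk. rewrite E2', sin_PI2 in Yk.
    set (rj := sqrt (fst (dv v wj) ^ 2 + snd (dv v wj) ^ 2)) in *.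
    set (rk := sqrt (fst (dv v wk) ^ 2 + snd (dv v wk) ^ 2)) in *.
    destruct (recon u (dv v wj) Hu) as [Rj1 Rj2]. destruct (recon u (dv v wk) Hu) as [Rk1 Rk2].
    rewrite Xj, Yj in Rj1, Rj2. rewrite Xk, Yk in Rk1, Rk2. unfold dv in *; simpl in *.
    apply (E2 P v Hext wj wk rk rj (V_clP wj Hj) (V_clP wk Hk) Hjv (Hr wk Hkv) (Rlt_le _ _ (Hr wj Hjv))).
    - rewrite Rj1, Rk1; ring.
    - rewrite Rj2, Rk2; ring. }
  assert (InP : forall x, closure P x -> x <> v -> a1 <= fph x <= a2).
  { intros x Hx Hxv. pose proof (ph_range x Hx Hxv). split.
    - assert (0 <= sin (fph x - a1)).
      { pose proof (M1P x Hx). rewrite PolM1 in H0 by auto. pose proof (Hr x Hxv). nra. }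
      apply sin_ge0_inv in H0; lra.
    - assert (0 <= sin (a2 - fph x)).
      { pose proof (M2P x Hx). rewrite PolM2 in H0 by auto. pose proof (Hr x Hxv). nra. }
      apply sin_ge0_inv in H0; lra. }
  assert (Hal : alpha = a2 - a1).
  { destruct Halpha as [Hub Hlub]. apply Rle_antisym.
    - apply Hlub. intros th [a [b [Ha [Hb [Hav [Hbv ->]]]]]].
      pose proof (InP a Ha Hav). pose proof (InP b Hb Hbv).
      assert (HH : Rabs (fph a - fph b) <= a2 - a1) by (apply Rabs_le; lra).
      change (vec_angle (dv v a) (dv v b) <= a2 - a1).
      unfold fph in HH.
      rewrite (vec_angle_polar u); auto; try apply nz_of_neq; auto; lra.
    - apply Hub. exists wk, wj. split; [apply V_clP; auto|]. split; [apply V_clP; auto|].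
      split; auto. split; auto. change (a2 - a1 = vec_angle (dv v wk) (dv v wj)).
      assert (HH : Rabs (fph wk - fph wj) = a2 - a1) by (apply Rabs_pos_eq; fold a1 a2; lra).
      unfold fph in HH.
      rewrite (vec_angle_polar u); auto; try apply nz_of_neq; auto; lra. }
  split; [lra|].
  set (N1c1 := fst u + M1c1). set (N1c2 := snd u + M1c2).
  set (N2c1 := fst u + M2c1). set (N2c2 := snd u + M2c2).
  assert (Unit1 : M1c1^2 + M1c2^2 = 1).
  { unfold M1c1, M1c2. replace ((cos a1 * - snd u - sin a1 * fst u) ^ 2 + (cos a1 * fst u - sin a1 * snd u) ^ 2)
      with ((sin a1 ^2 + cos a1 ^2) * ((fst u)^2 + (snd u)^2)) by ring.
    rewrite Hu, sc1; ring. }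
  assert (Unit2 : M2c1^2 + M2c2^2 = 1).
  { unfold M2c1, M2c2. replace ((sin a2 * fst u - cos a2 * - snd u) ^ 2 + (sin a2 * snd u - cos a2 * fst u) ^ 2)
      with ((sin a2 ^2 + cos a2 ^2) * ((fst u)^2 + (snd u)^2)) by ring.
    rewrite Hu, sc1; ring. }
  assert (MP' : forall c1 c2, c1^2 + c2^2 = 1 -> (forall x, closure P x -> 0 <= lin c1 c2 (dv v x)) ->
     forall z, P' z -> - h <= lin c1 c2 (dv v z)).
  { intros c1 c2 Hc HM z Hz. apply eps_ge. intros eps He.
    destruct (HF2 z Hz eps He) as [x [Hx Dx]].
    pose proof (HM x (closure_sub _ _ Hx)).
    pose proof (unit_le_edist (-c1) (-c2) z x ltac:(nra)).
    unfold lin, dv in *; simpl in *. nra. }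
  assert (NQ1 : forall x, closure (conv_hull (fun x => P x \/ P' x)) x -> 0 <= lin N1c1 N1c2 (dv v x)).
  { apply clos_lin. apply conv_lin. intros x [Hx|Hx].
    - pose proof (Hiii x Hx). pose proof (M1P x (closure_sub _ _ Hx)).
      unfold lin, N1c1, N1c2, Xc in *; lra.
    - pose proof (Hii x Hx). pose proof (MP' _ _ Unit1 M1P x Hx).
      unfold lin, N1c1, N1c2, Xc in *; lra. }
  assert (NQ2 : forall x, closure (conv_hull (fun x => P x \/ P' x)) x -> 0 <= lin N2c1 N2c2 (dv v x)).
  { apply clos_lin. apply conv_lin. intros x [Hx|Hx].
    - pose proof (Hiii x Hx). pose proof (M2P x (closure_sub _ _ Hx)).
      unfold lin, N2c1, N2c2, Xc in *; lra.
    - pose proof (Hii x Hx). pose proof (MP' _ _ Unit2 M2P x Hx).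
      unfold lin, N2c1, N2c2, Xc in *; lra. }
  set (b1 := (a1 + PI/2)/2). set (b2 := (a2 - PI/2)/2).
  assert (Cb1 : 0 < cos b1) by (apply cos_gt_0; unfold b1; lra).
  assert (Cb2 : 0 < cos b2) by (apply cos_gt_0; unfold b2; lra).
  assert (InQ : forall x, closure (conv_hull (fun x => P x \/ P' x)) x -> x <> v ->
            b1 - PI/2 <= fph x <= b2 + PI/2 /\ - PI <= fph x <= PI).
  { intros x Hx Hxv. destruct (polar_u u (dv v x) Hu (nz_of_neq v x Hxv)) as [HX [HY HR]].
    fold (fph x) in HX, HY, HR. pose proof (Hr x Hxv).
    set (r := sqrt (fst (dv v x) ^ 2 + snd (dv v x) ^ 2)) in *.
    split; [split|auto].
    - assert (E : lin N1c1 N1c2 (dv v x) = 2 * r * cos b1 * cos (fph x - b1)).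
      { replace (lin N1c1 N1c2 (dv v x)) with ((1 - sin a1) * Xc u (dv v x) + cos a1 * Yc u (dv v x))
          by (unfold lin, N1c1, N1c2, M1c1, M1c2, Xc, Yc; ring).
        rewrite HX, HY. replace a1 with (2 * b1 - PI/2) by (unfold b1; field).
        rewrite sin_minus, cos_minus, sin_PI2, cos_PI2, sin_2a, cos_2a_cos, cos_minus. ring. }
      pose proof (NQ1 x Hx). rewrite E in H0.
      assert (0 <= cos (fph x - b1)).
      { destruct (Rle_or_lt 0 (cos (fph x - b1))); auto. assert (0 < 2 * r * cos b1) by nra. nra. }
      apply cos_ge0_inv in H1; unfold b1 in *; lra.
    - assert (E : lin N2c1 N2c2 (dv v x) = 2 * r * cos b2 * cos (fph x - b2)).
      { replace (lin N2c1 N2c2 (dv v x)) with ((1 + sin a2) * Xc u (dv v x) - cos a2 * Yc u (dv v x))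
          by (unfold lin, N2c1, N2c2, M2c1, M2c2, Xc, Yc; ring).
        rewrite HX, HY. replace a2 with (2 * b2 + PI/2) by (unfold b2; field).
        rewrite sin_plus, cos_plus, sin_PI2, cos_PI2, sin_2a, cos_2a_cos, cos_minus. ring. }
      pose proof (NQ2 x Hx). rewrite E in H0.
      assert (0 <= cos (fph x - b2)).
      { destruct (Rle_or_lt 0 (cos (fph x - b2))); auto. assert (0 < 2 * r * cos b2) by nra. nra. }
      apply cos_ge0_inv in H1; unfold b2 in *; lra. }
  intros a b Ha Hb Hav Hbv.
  destruct (InQ a Ha Hav) as [[Ia1 Ia2] _]. destruct (InQ b Hb Hbv) as [[Ib1 Ib2] _].
  assert (HH : Rabs (fph a - fph b) <= (alpha + PI) / 2) by (apply Rabs_le; unfold b1, b2 in *; lra).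
  unfold fph in HH.
  rewrite (vec_angle_polar u); auto; try apply nz_of_neq; auto; lra.
Qed.

End Core.


Definition cr (a b : pt) := fst a * snd b - snd a * fst b.
Definition comb (l : R) (a : pt) (m : R) (b : pt) : pt :=
  (l * fst a + m * fst b, l * snd a + m * snd b).

Lemma Rdiv_le_0_compat a b : 0 <= a -> 0 < b -> 0 <= a / b.
Proof. intros; unfold Rdiv; apply Rmult_le_pos; [auto|left; apply Rinv_0_lt_compat; auto]. Qed.

Section Sep.
Variable G : pt -> Prop.
Hypothesis H3 : forall a b c, G a -> G b -> G c -> forall l m n, 0 <= l -> 0 <= m -> 0 <= n ->
  l * fst a + m * fst b + n * fst c = 0 -> l * snd a + m * snd b + n * snd c = 0 -> l = 0.

Lemma G_nz a : G a -> fst a <> 0 \/ snd a <> 0.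
Proof.
  intros Ga. destruct (Req_dec (fst a) 0); [|left; auto]. destruct (Req_dec (snd a) 0); [|right; auto].
  exfalso. assert (1 = 0) by (apply (H3 a a a Ga Ga Ga 1 0 0); lra). lra.
Qed.

Lemma G_par e1 e2 : G e1 -> G e2 -> cr e1 e2 = 0 -> exists k, 0 < k /\ e2 = comb k e1 0 e1.
Proof.
  intros G1 G2 Hc. destruct e1 as [p1 p2], e2 as [q1 q2]. unfold cr, comb in *; simpl in *.
  pose proof (G_nz _ G1) as Hnz; simpl in Hnz.
  assert (Hn : 0 < p1 * p1 + p2 * p2) by (destruct Hnz as [H|H]; [assert (0 < p1*p1) by (apply Rsqr_pos_lt; auto)|assert (0 < p2*p2) by (apply Rsqr_pos_lt; auto)]; nra).
  set (k := (p1 * q1 + p2 * q2) / (p1 * p1 + p2 * p2)).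
  assert (E1 : q1 = k * p1).
  { unfold k. apply (Rmult_eq_reg_r (p1 * p1 + p2 * p2)); [|lra].
    replace ((p1 * q1 + p2 * q2) / (p1 * p1 + p2 * p2) * p1 * (p1 * p1 + p2 * p2)) with ((p1 * q1 + p2 * q2) * p1) by (field; lra).
    assert (q1 * (p1 * p1 + p2 * p2) - (p1 * q1 + p2 * q2) * p1 = - p2 * (p1 * q2 - p2 * q1)) by ring.
    rewrite Hc in H. lra. }
  assert (E2 : q2 = k * p2).
  { unfold k. apply (Rmult_eq_reg_r (p1 * p1 + p2 * p2)); [|lra].
    replace ((p1 * q1 + p2 * q2) / (p1 * p1 + p2 * p2) * p2 * (p1 * p1 + p2 * p2)) with ((p1 * q1 + p2 * q2) * p2) by (field; lra).
    assert (q2 * (p1 * p1 + p2 * p2) - (p1 * q1 + p2 * q2) * p2 = p1 * (p1 * q2 - p2 * q1)) by ring.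
    rewrite Hc in H. lra. }
  exists k. split.
  - destruct (Rlt_or_le 0 k) as [|Hk]; auto. exfalso.
    assert (1 = 0).
    { apply (H3 (q1,q2) (p1,p2) (p1,p2) G2 G1 G1 1 (-k) 0); simpl; lra. }
    lra.
  - f_equal; lra.
Qed.

Lemma sep_ind (l : list pt) : (forall d, In d l -> G d) -> l <> nil ->
  exists e1 e2, G e1 /\ G e2 /\ 0 <= cr e1 e2 /\
    forall d, In d l -> exists a b, 0 <= a /\ 0 <= b /\ d = comb a e1 b e2.
Proof.
  induction l as [|d l IH]; intros HG Hne; [congruence|].
  assert (Gd : G d) by (apply HG; left; auto).
  destruct l as [|d' l'].
  { exists d, d. split; auto. split; auto. split; [unfold cr; lra|].
    intros x [<-|[]]. exists 1, 0. split; [lra|]. split; [lra|]. destruct d; unfold comb; simpl; f_equal; ring. }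
  destruct IH as [e1 [e2 [G1 [G2 [Hc Hold]]]]]; [intros; apply HG; right; auto|congruence|].
  destruct (Rle_lt_or_eq_dec _ _ Hc) as [Hcp|Hc0].
  -
    set (c := cr e1 e2) in *.
    pose (l0 := cr d e2 / c). pose (m0 := cr e1 d / c).
    assert (Hd : d = comb l0 e1 m0 e2).
    { unfold l0, m0, c, comb, cr in *. destruct d, e1, e2; simpl in *. f_equal; field; lra. }
    assert (C1 : cr e1 d = m0 * c) by (unfold m0; field; lra).
    assert (C2 : cr d e2 = l0 * c) by (unfold l0; field; lra).
    clearbody l0 m0.
    destruct (Rle_or_lt 0 l0) as [Hl|Hl]; destruct (Rle_or_lt 0 m0) as [Hm|Hm].
    + exists e1, e2. split; auto. split; auto. split; auto.
      intros x [<-|Hx]; [exists l0, m0; auto|]. apply Hold; auto.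
    +
      destruct (Rle_lt_or_eq_dec _ _ Hl) as [Hl'|Hl'].
      * exists d, e2. split; auto. split; auto. split; [rewrite C2; nra|].
        intros x [<-|Hx]. { exists 1, 0. split; [lra|]. split; [lra|]. destruct d; unfold comb; simpl; f_equal; ring. }
        destruct (Hold x Hx) as [a [b [Ha [Hb Ex]]]].
        exists (a / l0), (b - a * m0 / l0). split; [apply Rdiv_le_0_compat; lra|].
        split; [assert (0 <= a * m0 / l0 * -1); [|lra]|].
        { assert (a * m0 / l0 * -1 = a * (- m0) / l0) by (field; lra). rewrite H.
          apply Rdiv_le_0_compat; [nra|lra]. }
        rewrite Ex, Hd. destruct e1, e2; unfold comb; simpl. f_equal; field; lra.
      * exfalso. subst l0.
        assert (1 = 0); [|lra].
        apply (H3 d e2 e2 Gd G2 G2 1 (- m0) 0); try lra; rewrite Hd; unfold comb; simpl; ring.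
    +
      destruct (Rle_lt_or_eq_dec _ _ Hm) as [Hm'|Hm'].
      * exists e1, d. split; auto. split; auto. split; [rewrite C1; nra|].
        intros x [<-|Hx]. { exists 0, 1. split; [lra|]. split; [lra|]. destruct d; unfold comb; simpl; f_equal; ring. }
        destruct (Hold x Hx) as [a [b [Ha [Hb Ex]]]].
        exists (a - b * l0 / m0), (b / m0). split; [|split; [apply Rdiv_le_0_compat; lra|]].
        { assert (0 <= b * (- l0) / m0) by (apply Rdiv_le_0_compat; [nra|lra]).
          assert (b * (- l0) / m0 = - (b * l0 / m0)) by (field; lra). lra. }
        rewrite Ex, Hd. destruct e1, e2; unfold comb; simpl. f_equal; field; lra.
      * exfalso. subst m0.
        assert (1 = 0); [|lra].
        apply (H3 d e1 e1 Gd G1 G1 1 (- l0) 0); try lra; rewrite Hd; unfold comb; simpl; ring.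
    + exfalso. assert (1 = 0); [|lra].
      apply (H3 d e1 e2 Gd G1 G2 1 (- l0) (- m0)); try lra; rewrite Hd; unfold comb; simpl; ring.
  -
    destruct (G_par e1 e2 G1 G2 (eq_sym Hc0)) as [k [Hk Ek]].
    assert (Hold' : forall x, In x (d' :: l') -> exists a, 0 <= a /\ x = comb a e1 0 e1).
    { intros x Hx. destruct (Hold x Hx) as [a [b [Ha [Hb Ex]]]]. exists (a + b * k).
      split; [nra|]. rewrite Ex, Ek. destruct e1; unfold comb; simpl; f_equal; ring. }
    destruct (Rlt_or_le 0 (cr e1 d)) as [Hp|Hnp].
    + exists e1, d. split; auto. split; auto. split; [lra|].
      intros x [<-|Hx]. { exists 0, 1. split; [lra|]. split; [lra|]. destruct d; unfold comb; simpl; f_equal; ring. }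
      destruct (Hold' x Hx) as [a [Ha Ex]]. exists a, 0. split; auto. split; [lra|].
      rewrite Ex. destruct e1, x; unfold comb; simpl; f_equal; ring.
    + destruct (Rle_lt_or_eq_dec _ _ Hnp) as [Hn|Hz].
      * exists d, e1. split; auto. split; auto. split; [unfold cr in *; lra|].
        intros x [<-|Hx]. { exists 1, 0. split; [lra|]. split; [lra|]. destruct d; unfold comb; simpl; f_equal; ring. }
        destruct (Hold' x Hx) as [a [Ha Ex]]. exists 0, a. split; [lra|]. split; auto.
        rewrite Ex. destruct e1, x; unfold comb; simpl; f_equal; ring.
      * destruct (G_par e1 d G1 Gd Hz) as [k' [Hk' Ek']].
        exists e1, e1. split; auto. split; auto. split; [unfold cr; lra|].
        intros x [<-|Hx]. { exists k', 0. split; [lra|]. split; [lra|]. auto. }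
        destruct (Hold' x Hx) as [a [Ha Ex]]. exists a, 0. split; auto. split; [lra|]. auto.
Qed.

Lemma sep_final (l : list pt) : (forall d, In d l -> G d) ->
  exists u, (fst u)^2 + (snd u)^2 = 1 /\ forall d, In d l -> 0 <= fst u * fst d + snd u * snd d.
Proof.
  intros HG. destruct l as [|d0 l0].
  { exists (1, 0). simpl. split; [ring|]. intros d []. }
  destruct (sep_ind (d0 :: l0) HG ltac:(congruence)) as [e1 [e2 [G1 [G2 [Hc Hall]]]]].
  destruct e1 as [p1 p2], e2 as [q1 q2].
  set (n1 := sqrt (p1^2 + p2^2)). set (n2 := sqrt (q1^2 + q2^2)).
  assert (Hn1 : 0 < n1).
  { apply sqrt_lt_R0. destruct (G_nz _ G1) as [H|H]; simpl in H;
    [assert (0 < p1 * p1) by (apply Rsqr_pos_lt; auto)|assert (0 < p2 * p2) by (apply Rsqr_pos_lt; auto)]; nra. }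
  assert (Hn2 : 0 < n2).
  { apply sqrt_lt_R0. destruct (G_nz _ G2) as [H|H]; simpl in H;
    [assert (0 < q1 * q1) by (apply Rsqr_pos_lt; auto)|assert (0 < q2 * q2) by (apply Rsqr_pos_lt; auto)]; nra. }
  assert (Sn1 : n1 * n1 = p1^2 + p2^2) by (apply sqrt_sqrt; apply sum_sq_nonneg).
  assert (Sn2 : n2 * n2 = q1^2 + q2^2) by (apply sqrt_sqrt; apply sum_sq_nonneg).
  assert (CS : - (p1 * q1 + p2 * q2) <= n1 * n2).
  { apply sq_le_imp; [nra|].
    replace (n1 * n2 * (n1 * n2)) with ((n1*n1)*(n2*n2)) by ring. rewrite Sn1, Sn2.
    pose proof (pow2_ge_0 (p1 * q2 - p2 * q1)). nra. }
  set (w1 := p1 / n1 + q1 / n2). set (w2 := p2 / n1 + q2 / n2).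
  assert (D1 : 0 <= w1 * p1 + w2 * p2).
  { replace (w1 * p1 + w2 * p2) with (n1 + (p1 * q1 + p2 * q2) / n2).
    - assert (- n1 <= (p1 * q1 + p2 * q2) / n2); [|lra].
      apply (Rmult_le_reg_r n2); auto. unfold Rdiv; rewrite Rmult_assoc, Rinv_l by lra. lra.
    - transitivity ((p1^2 + p2^2) / n1 + (p1 * q1 + p2 * q2) / n2).
      + rewrite <- Sn1; field; lra.
      + unfold w1, w2; field; lra. }
  assert (D2 : 0 <= w1 * q1 + w2 * q2).
  { replace (w1 * q1 + w2 * q2) with (n2 + (p1 * q1 + p2 * q2) / n1).
    - assert (- n2 <= (p1 * q1 + p2 * q2) / n1); [|lra].
      apply (Rmult_le_reg_r n1); auto. unfold Rdiv; rewrite Rmult_assoc, Rinv_l by lra. lra.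
    - transitivity ((q1^2 + q2^2) / n2 + (p1 * q1 + p2 * q2) / n1).
      + rewrite <- Sn2; field; lra.
      + unfold w1, w2; field; lra. }
  assert (Wnz : 0 < w1^2 + w2^2).
  { destruct (Rlt_or_le 0 (w1^2 + w2^2)) as [|Hle]; auto. exfalso.
    assert (w1 = 0 /\ w2 = 0) as [Z1 Z2] by (pose proof (pow2_ge_0 w1); pose proof (pow2_ge_0 w2); split; nra).
    assert (n2 = 0); [|lra].
    apply (H3 (p1,p2) (q1,q2) (q1,q2) G1 G2 G2 n2 n1 0); simpl; try lra.
    - assert (E : n2 * p1 + n1 * q1 = (p1 / n1 + q1 / n2) * (n1 * n2)) by (field; lra).
      unfold w1 in Z1. rewrite Z1 in E. lra.
    - assert (E : n2 * p2 + n1 * q2 = (p2 / n1 + q2 / n2) * (n1 * n2)) by (field; lra).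
      unfold w2 in Z2. rewrite Z2 in E. lra. }
  set (W := sqrt (w1^2 + w2^2)). assert (0 < W) by (apply sqrt_lt_R0; auto).
  exists (w1 / W, w2 / W). cbn [fst snd]. split.
  - replace ((w1 / W) ^ 2 + (w2 / W) ^ 2) with ((w1^2 + w2^2) / (W * W)) by (field; lra).
    assert (W * W = w1^2 + w2^2) by (unfold W; apply sqrt_sqrt; lra). rewrite H0. field; lra.
  - intros d Hd. destruct (Hall d Hd) as [a [b [Ha [Hb ->]]]]. unfold comb; simpl.
    replace (w1 / W * (a * p1 + b * q1) + w2 / W * (a * p2 + b * q2))
      with ((a * (w1 * p1 + w2 * p2) + b * (w1 * q1 + w2 * q2)) / W) by (field; lra).
    apply Rdiv_le_0_compat; [nra|lra].
Qed.
End Sep.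


Lemma cv_const c : Un_cv (fun _ => c) c.
Proof. intros e He. exists 0%nat. intros. unfold Rdist. rewrite Rminus_diag, Rabs_R0. lra. Qed.

Lemma cv_q a A c0 c1 c2 : Un_cv a A ->
  Un_cv (fun n => c0 + c1 * a n + c2 * (a n * a n)) (c0 + c1 * A + c2 * (A * A)).
Proof.
  intros H. apply CV_plus. apply CV_plus. apply cv_const. apply CV_mult. apply cv_const. auto.
  apply CV_mult. apply cv_const. apply CV_mult; auto.
Qed.

Lemma cv_eq f g l l' : Un_cv f l -> (forall n, f n = g n) -> l = l' -> Un_cv g l'.
Proof. intros H E <-. apply (Un_cv_ext f g E l H). Qed.

Lemma inv_small c : 0 < c -> exists N, forall n, (n >= N)%nat -> / (INR n + 1) < c.
Proof.
  intros Hc. destruct (archimed_cor1 c Hc) as [N [HN HN0]]. exists N. intros n Hn.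
  apply Rle_lt_trans with (/ INR N); auto. apply Rinv_le_contravar.
  apply lt_0_INR; auto. apply le_INR in Hn. lra.
Qed.

Lemma cv_inv : Un_cv (fun n => / (INR n + 1)) 0.
Proof.
  intros e He. destruct (inv_small e He) as [N HN]. exists N. intros n Hn.
  unfold Rdist. rewrite Rminus_0_r, Rabs_pos_eq. apply HN; lia.
  left; apply Rinv_0_lt_compat. pose proof (pos_INR n); lra.
Qed.

Definition Dq (v y : pt) := (fst y - fst v)^2 + (snd y - snd v)^2.

Lemma Dq_edist v y : Dq v y = edist v y * edist v y.
Proof. rewrite edist_sq. unfold Dq. ring. Qed.

Section Hilbert.
Variables (S : pt -> Prop) (v : pt) (h : R).
Hypothesis Hh : 0 < h.
Hypothesis Hconv : forall x y t, S x -> S y -> 0 <= t <= 1 ->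
  S (fst x + t * (fst y - fst x), snd x + t * (snd y - snd x)).
Hypothesis Hlow : forall y, S y -> h <= edist v y.
Hypothesis Happ : forall eps, 0 < eps -> exists y, S y /\ edist v y < h + eps.

Lemma hilbert : exists u, (fst u)^2 + (snd u)^2 = 1 /\ forall z, S z -> h <= Xc u (dv v z).
Proof.
  set (i := fun n : nat => / (INR n + 1)).
  assert (Hi : forall n, 0 < i n /\ i n <= 1).
  { intros n. unfold i. pose proof (pos_INR n). split. apply Rinv_0_lt_compat; lra.
    rewrite <- Rinv_1. apply Rinv_le_contravar; lra. }
  assert (Hseq : forall n, exists y, S y /\ edist v y < h + i n).
  { intros n; apply Happ; apply Hi. }
  set (y := fun n => proj1_sig (constructive_indefinite_description _ (Hseq n))).
  assert (Hy : forall n, S (y n) /\ edist v (y n) < h + i n).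
  { intros n. unfold y. destruct (constructive_indefinite_description _ (Hseq n)); auto. }
  set (dl := fun n => i n * (2 * h + i n)).
  assert (HD1 : forall n, Dq v (y n) < h * h + dl n).
  { intros n. rewrite Dq_edist. destruct (Hy n) as [S1 D1]. pose proof (Hlow _ S1).
    unfold dl. nra. }
  assert (HD0 : forall p, S p -> h * h <= Dq v p).
  { intros p Sp. rewrite Dq_edist. pose proof (Hlow _ Sp). nra. }
  assert (Hdl : forall n, 0 <= dl n <= (2 * h + 1) * i n).
  { intros n. unfold dl. destruct (Hi n). split; nra. }
  assert (Pair : forall n m, (fst (y n) - fst (y m))^2 + (snd (y n) - snd (y m))^2 <= 2 * dl n + 2 * dl m).
  { intros n m. destruct (Hy n) as [Sn _]. destruct (Hy m) as [Sm _].
    pose proof (HD0 _ (Hconv _ _ (1/2) Sn Sm ltac:(lra))).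
    pose proof (HD1 n). pose proof (HD1 m). unfold Dq in *; cbn [fst snd] in *.
    set (a1 := fst (y n)) in *. set (a2 := snd (y n)) in *. set (b1 := fst (y m)) in *. set (b2 := snd (y m)) in *.
    assert (E : (a1 - b1)^2 + (a2 - b2)^2 = 2 * ((a1 - fst v)^2 + (a2 - snd v)^2) + 2 * ((b1 - fst v)^2 + (b2 - snd v)^2)
      - 4 * ((a1 + 1/2 * (b1 - a1) - fst v)^2 + (a2 + 1/2 * (b2 - a2) - snd v)^2)) by field.
    lra. }
  assert (Cau : forall (f : pt -> R), (forall n m, (f (y n) - f (y m))^2 <= 2 * dl n + 2 * dl m) -> Cauchy_crit (fun n => f (y n))).
  { intros f Hf e He. assert (Hc : 0 < e * e / (4 * (2 * h + 1))) by (apply Rdiv_lt_0_compat; nra).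
    destruct (inv_small _ Hc) as [N HN]. exists N. intros n m Hn Hm.
    unfold Rdist. apply Rsqr_incrst_0; [|apply Rabs_pos|lra]. rewrite <- Rsqr_abs. unfold Rsqr.
    pose proof (Hf n m). pose proof (HN n Hn). pose proof (HN m Hm). fold (i n) (i m) in *.
    pose proof (Hdl n). pose proof (Hdl m).
    assert ((2 * h + 1) * i n < e * e / 4).
    { replace (e * e / 4) with ((2 * h + 1) * (e * e / (4 * (2 * h + 1)))) by (field; lra).
      apply Rmult_lt_compat_l; lra. }
    assert ((2 * h + 1) * i m < e * e / 4).
    { replace (e * e / 4) with ((2 * h + 1) * (e * e / (4 * (2 * h + 1)))) by (field; lra).
      apply Rmult_lt_compat_l; lra. }
    simpl in H. lra. }
  assert (C1 : Cauchy_crit (fun n => fst (y n))).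
  { apply (Cau fst). intros n m. pose proof (Pair n m). pose proof (pow2_ge_0 (snd (y n) - snd (y m))). lra. }
  assert (C2 : Cauchy_crit (fun n => snd (y n))).
  { apply (Cau snd). intros n m. pose proof (Pair n m). pose proof (pow2_ge_0 (fst (y n) - fst (y m))). lra. }
  destruct (R_complete _ C1) as [Y1 HY1]. destruct (R_complete _ C2) as [Y2 HY2].
  set (Yp := (Y1, Y2)).
  assert (CVD : Un_cv (fun n => Dq v (y n)) (Dq v Yp)).
  { eapply cv_eq. apply CV_plus; [apply (cv_q _ _ ((fst v)^2) (-2 * fst v) 1 HY1)|apply (cv_q _ _ ((snd v)^2) (-2 * snd v) 1 HY2)].
    - intros n. unfold Dq. ring.
    - unfold Dq, Yp; simpl. ring. }
  assert (DY : h * h <= Dq v Yp).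
  { apply Rle_cv_lim with (Un := fun _ => h * h) (Vn := fun n => Dq v (y n)); auto.
    intros n; apply HD0; apply Hy. apply cv_const. }
  assert (Cdl : Un_cv dl 0).
  { eapply cv_eq. apply CV_mult. apply cv_inv. apply CV_plus. apply (cv_const (2 * h)). apply cv_inv.
    intros n; unfold dl, i; cbv beta; ring. ring. }
  assert (Key : forall z, S z -> forall t, 0 < t <= 1 ->
     0 <= 2 * t * ((Y1 - fst v) * (fst z - Y1) + (Y2 - snd v) * (snd z - Y2)) + t * t * ((fst z - Y1)^2 + (snd z - Y2)^2)).
  { intros z Sz t Ht.
    set (F := fun n => Dq v (fst (y n) + t * (fst z - fst (y n)), snd (y n) + t * (snd z - snd (y n))) - Dq v (y n) + dl n).
    assert (HF : forall n, 0 <= F n).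
    { intros n. unfold F. pose proof (HD0 _ (Hconv _ _ t (proj1 (Hy n)) Sz ltac:(lra))). pose proof (HD1 n). lra. }
    assert (CF : Un_cv F (2 * t * ((Y1 - fst v) * (fst z - Y1) + (Y2 - snd v) * (snd z - Y2)) + t * t * ((fst z - Y1)^2 + (snd z - Y2)^2))).
    { eapply cv_eq. apply CV_plus. apply CV_plus.
      apply (cv_q _ _ ((t * fst z - fst v)^2 - (fst v)^2) (2 * (1 - t) * (t * fst z - fst v) + 2 * fst v) ((1-t)^2 - 1) HY1).
      apply (cv_q _ _ ((t * snd z - snd v)^2 - (snd v)^2) (2 * (1 - t) * (t * snd z - snd v) + 2 * snd v) ((1-t)^2 - 1) HY2).
      apply Cdl.
      - intros n. unfold F, Dq; simpl. ring.
      - ring. }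
    apply Rle_cv_lim with (Un := fun _ => 0) (Vn := F); auto. apply cv_const. }
  assert (Key2 : forall z, S z -> 0 <= (Y1 - fst v) * (fst z - Y1) + (Y2 - snd v) * (snd z - Y2)).
  { intros z Sz. set (g := (Y1 - fst v) * (fst z - Y1) + (Y2 - snd v) * (snd z - Y2)).
    set (q := (fst z - Y1)^2 + (snd z - Y2)^2). assert (Hq : 0 <= q) by (apply sum_sq_nonneg).
    destruct (Rle_or_lt 0 g) as [|Hg]; auto. exfalso.
    set (t := Rmin 1 (- g / (q + 1))).
    assert (Ht0 : 0 < t) by (unfold t; apply Rmin_pos; [lra|apply Rdiv_lt_0_compat; lra]).
    assert (Ht1 : t <= 1) by apply Rmin_l. assert (Ht2 : t <= - g / (q + 1)) by apply Rmin_r.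
    pose proof (Key z Sz t (conj Ht0 Ht1)). fold g q in H.
    assert (t * q <= - g * q / (q + 1)).
    { replace (- g * q / (q + 1)) with ((- g / (q + 1)) * q) by (field; lra). apply Rmult_le_compat_r; auto. }
    assert (- g * q / (q + 1) < - g).
    { apply (Rmult_lt_reg_r (q + 1)); [lra|]. replace (- g * q / (q + 1) * (q + 1)) with (- g * q) by (field; lra). nra. }
    nra. }
  set (r := sqrt (Dq v Yp)).
  assert (Hr2 : r * r = Dq v Yp) by (apply sqrt_sqrt; unfold Dq; apply sum_sq_nonneg).
  assert (Hr : h <= r) by (apply sq_le_imp; [apply sqrt_pos|lra]).
  exists ((Y1 - fst v) / r, (Y2 - snd v) / r). split.
  - cbn [fst snd]. replace (((Y1 - fst v) / r) ^ 2 + ((Y2 - snd v) / r) ^ 2) with (Dq v Yp / (r * r)) by (unfold Dq, Yp; simpl; field; lra).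
    rewrite <- Hr2. field. lra.
  - intros z Sz. pose proof (Key2 z Sz). unfold Xc, dv; cbn [fst snd].
    replace ((Y1 - fst v) / r * (fst z - fst v) + (Y2 - snd v) / r * (snd z - snd v))
      with (((Y1 - fst v) * (fst z - Y1) + (Y2 - snd v) * (snd z - Y2)) / r + (r * r) / r).
    + replace (r * r / r) with r by (field; lra).
      assert (0 <= ((Y1 - fst v) * (fst z - Y1) + (Y2 - snd v) * (snd z - Y2)) / r).
      { unfold Rdiv; apply Rmult_le_pos; auto. left; apply Rinv_0_lt_compat; lra. }
      lra.
    + rewrite Hr2. unfold Dq, Yp; simpl. field. lra.
Qed.
End Hilbert.


Lemma dist_exists x (S : pt -> Prop) : (exists y, S y) -> exists r, dist_to x S r.
Proof.
  intros [y0 Hy0].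
  set (E := fun m => exists y, S y /\ m = - edist x y).
  destruct (completeness E) as [m [Hub Hlub]].
  - exists 0. intros m [y [_ ->]]. pose proof (edist_nonneg x y). lra.
  - exists (- edist x y0). exists y0; auto.
  - exists (- m). split.
    + intros d [y [Sy ->]]. assert (- edist x y <= m) by (apply Hub; exists y; auto). lra.
    + intros r' Hr'. assert (m <= - r'); [|lra]. apply Hlub. intros z [y [Sy ->]].
      assert (r' <= edist x y) by (apply Hr'; exists y; auto). lra.
Qed.

Lemma dist_approx x S r : dist_to x S r -> forall eps, 0 < eps -> exists y, S y /\ edist x y < r + eps.
Proof.
  intros [Hlb Hglb] eps He. apply NNPP. intros Hn.
  assert (r + eps <= r); [|lra]. apply Hglb. intros d [y [Sy ->]].
  destruct (Rle_or_lt (r + eps) (edist x y)); auto. exfalso; apply Hn; eauto.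
Qed.

Lemma dist_low x S r : dist_to x S r -> forall y, S y -> r <= edist x y.
Proof. intros [Hlb _] y Sy. apply Hlb. exists y; auto. Qed.

Definition ptEqb (a b : pt) : bool :=
  if Req_EM_T (fst a) (fst b) then (if Req_EM_T (snd a) (snd b) then true else false) else false.

Lemma ptEqb_spec a b : ptEqb a b = true <-> a = b.
Proof.
  unfold ptEqb. destruct a as [a1 a2], b as [b1 b2]; simpl.
  destruct (Req_EM_T a1 b1); destruct (Req_EM_T a2 b2); split; intros H; try congruence;
  try (subst; auto); inversion H; contradiction.
Qed.

Theorem mainTheorem18 (P P' : pt -> Prop) (xc : pt) (h alpha : R) :
  open_convex_polygon P -> open_convex_polygon P' ->
  is_vertex P xc ->
  hausdorff P P' h ->
  dist_to xc P' h ->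
  angle_at P xc alpha ->
  is_vertex (conv_hull (fun x => P x \/ P' x)) xc /\
  (forall beta, angle_at (conv_hull (fun x => P x \/ P' x)) xc beta ->
     beta <= (alpha + PI) / 2) /\
  (alpha + PI) / 2 < PI.
Proof.
  intros [[V HV] [x0 Hx0]] [[V' HV'] [x0' Hx0']] Hvert [s1 [s2 [Hs1 [Hs2 Hh]]]] Hdist Hang.
  set (v := xc) in *.
  assert (HF1 : forall x, P x -> forall eps, 0 < eps -> exists y, P' y /\ edist x y < h + eps).
  { intros x Hx eps He. destruct (dist_exists x P' (ex_intro _ x0' Hx0')) as [r Hr].
    assert (r <= s1) by (apply (proj1 Hs1); exists x; auto).
    pose proof (Rmax_l s1 s2). destruct (dist_approx _ _ _ Hr eps He) as [y [Hy Dy]].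
    exists y; split; auto. lra. }
  assert (HF2 : forall z, P' z -> forall eps, 0 < eps -> exists x, P x /\ edist z x < h + eps).
  { intros x Hx eps He. destruct (dist_exists x P (ex_intro _ x0 Hx0)) as [r Hr].
    assert (r <= s2) by (apply (proj1 Hs2); exists x; auto).
    pose proof (Rmax_r s1 s2). destruct (dist_approx _ _ _ Hr eps He) as [y [Hy Dy]].
    exists y; split; auto. lra. }
  assert (Hh0 : 0 <= h).
  { apply (proj2 Hdist). intros d [y [_ ->]]. apply edist_nonneg. }
  assert (HPc := P_conv V P HV).
  assert (HVc := conv_sub_clP V P HV x0 Hx0).
  assert (Hln := Hline V P HV x0 Hx0).
  assert (Hu : exists u, (fst u)^2 + (snd u)^2 = 1 /\ (forall x, P x -> 0 <= Xc u (dv v x)) /\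
                         (forall z, P' z -> h <= Xc u (dv v z))).
  { destruct (Rle_lt_or_eq_dec _ _ Hh0) as [Hpos|Hz].
    - destruct (hilbert P' v h Hpos (P_convex V' P' HV') (dist_low _ _ _ Hdist) (dist_approx _ _ _ Hdist))
        as [u [Hu Hii]].
      exists u. split; auto. split; auto.
      intros x Hx. apply eps_ge. intros eps He. destruct (HF1 x Hx eps He) as [y [Hy Dy]].
      pose proof (Hii y Hy). pose proof (unit_le_edist (fst u) (snd u) y x Hu).
      rewrite edist_sym in Dy. unfold Xc, dv in *; cbn [fst snd] in *.
      assert (fst u * (fst x - fst v) + snd u * (snd x - snd v) = (fst u * (fst y - fst v) + snd u * (snd y - snd v)) - (fst u * (fst y - fst x) + snd u * (snd y - snd x))) by ring.
      lra.
    - subst h.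
      set (G := fun d => exists w, In w V /\ w <> v /\ d = dv v w).
      assert (H3 : forall a b c, G a -> G b -> G c -> forall l m n, 0 <= l -> 0 <= m -> 0 <= n ->
          l * fst a + m * fst b + n * fst c = 0 -> l * snd a + m * snd b + n * snd c = 0 -> l = 0).
      { intros a b c [wa [Ia [Na ->]]] [wb [Ib [Nb ->]]] [wc [Ic [Nc ->]]] l m n Hl Hm Hn E1 E2'.
        unfold dv in *; cbn [fst snd] in *.
        destruct (Rle_lt_or_eq_dec _ _ Hl) as [Hlp|]; auto. exfalso.
        assert (Cwa : closure P wa) by (apply HVc; apply conv_single; auto).
        destruct (Rle_lt_or_eq_dec 0 (m + n) ltac:(lra)) as [Hmn|Hmn].
        - set (t := n / (m + n)).
          assert (Ht : 0 <= t <= 1).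
          { unfold t; split. apply Rdiv_le_0_compat; lra.
            apply (Rmult_le_reg_r (m + n)); auto. unfold Rdiv; rewrite Rmult_assoc, Rinv_l by lra. lra. }
          assert (Cm := conv_comb2 (fun w => In w V) wb wc t (conv_single _ _ Ib) (conv_single _ _ Ic) Ht).
          apply (E2 P v Hvert wa _ l (m + n) Cwa (HVc _ Cm) Na Hlp ltac:(lra)); cbn [fst snd].
          + transitivity (l * (fst wa - fst v) + m * (fst wb - fst v) + n * (fst wc - fst v)); [unfold t; field; lra | exact E1].
          + transitivity (l * (snd wa - snd v) + m * (snd wb - snd v) + n * (snd wc - snd v)); [unfold t; field; lra | exact E2'].
        - assert (m = 0) by lra. assert (n = 0) by lra. subst m n.
          apply (E2 P v Hvert wa wa l 0 Cwa Cwa Na Hlp ltac:(lra)); lra. }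
      set (L := map (dv v) (filter (fun w => negb (ptEqb w v)) V)).
      destruct (sep_final G H3 L) as [u [Hu Hsep]].
      { intros d Hd. unfold L in Hd. apply in_map_iff in Hd. destruct Hd as [w [<- Hw]].
        apply filter_In in Hw. destruct Hw as [Hw Hb]. exists w. split; auto. split; auto.
        intros E. apply ptEqb_spec in E. rewrite E in Hb. discriminate. }
      assert (HVu : forall w, In w V -> 0 <= Xc u (dv v w)).
      { intros w Hw. destruct (classic (w = v)) as [->|Hne].
        - unfold Xc, dv; cbn [fst snd]. lra.
        - apply Hsep. unfold L. apply in_map. apply filter_In. split; auto.
          destruct (ptEqb w v) eqn:E; auto. apply ptEqb_spec in E. contradiction. }
      assert (Hiii : forall x, P x -> 0 <= Xc u (dv v x)).
      { intros x Hx. rewrite Xc_lin. apply (conv_lin (fun w => In w V)); auto.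
        }
      exists u. split; auto. split; auto.
      intros z Hz'. apply eps_ge. intros eps He. destruct (HF2 z Hz' eps He) as [x [Hx Dx]].
      pose proof (Hiii x Hx). pose proof (unit_le_edist (- fst u) (- snd u) z x ltac:(nra)).
      unfold Xc, dv in *; cbn [fst snd] in *.
      assert (fst u * (fst z - fst v) + snd u * (snd z - snd v) = (fst u * (fst x - fst v) + snd u * (snd x - snd v)) - (- fst u * (fst z - fst x) + - snd u * (snd z - snd x))) by ring.
      lra. }
  destruct Hu as [u [Hu [Hiii Hii]]].
  destruct (core_main P P' v h alpha V u Hu HPc HVc Hln Hvert Hiii Hii HF2 Hang) as [Hapi Hbound].
  pose proof PI_RGT_0.
  split; [|split; [|lra]].
  - split.
    + apply (closure_mono P); [intros x Hx; apply conv_single; left; auto|]. apply (proj1 Hvert).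
    + intros a b t Ha Hb Ht Hv.
      destruct (classic (a = v)) as [Eav|Nav].
      * split; auto. rewrite Eav in Hv. destruct b as [b1 b2], v as [v1 v2]. cbn [fst snd] in Hv.
        inversion Hv. assert (t * (b1 - v1) = 0) by lra. assert (t * (b2 - v2) = 0) by lra.
        f_equal; nra.
      * exfalso.
        assert (Nbv : b <> v).
        { intros ->. apply Nav. destruct a as [a1 a2], v as [v1 v2]. cbn [fst snd] in Hv. inversion Hv.
          assert ((1 - t) * (a1 - v1) = 0) by lra. assert ((1 - t) * (a2 - v2) = 0) by lra. f_equal; nra. }
        pose proof (Hbound a b Ha Hb Nav Nbv).
        set (k := (1 - t) / t).
        assert (Hk : 0 < k) by (unfold k; apply Rdiv_lt_0_compat; lra).
        assert (Eb : dv v b = (- k * fst (dv v a), - k * snd (dv v a))).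
        { unfold k, dv. rewrite Hv. cbn [fst snd]. f_equal; field; lra. }
        rewrite Eb, vec_angle_opp in H0 by (auto; apply nz_of_neq; auto). lra.
  - intros beta [Hub Hlub]. apply Hlub. intros th [a [b [Ha [Hb [Nav [Nbv ->]]]]]].
    apply (Hbound a b Ha Hb Nav Nbv).
Qed.
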